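(* Let $\tau$ be a nonnegative bipartite quantum correlation measure satisfying the monogamy relation $\tau(\rho_{X_1|X_2\cdots X_N})\geq \tau(\rho_{X_1X_2})+\cdots+\tau(\rho_{X_1X_N})$ for every multipartite state $\rho_{X_1\cdots X_N}$ (with subsystems possibly formed by grouping several parties). Let $\rho_{A_1A_2\cdots A_n}$ be an $n$-partite state, and let $k\geq 1$, $\frac12\leq p\leq 1$, $r\geq 2$, $0\leq\alpha\leq \frac r2$; put $l=\frac{(1+k)^{\alpha/r}-p^{\alpha/r}}{k^{\alpha/r}}$. Write $\tau_{A_1A_i}=\tau(\rho_{A_1A_i})$ and $\tau_{A_1|A_{j+1}\cdots A_n}=\tau(\rho_{A_1|A_{j+1}\cdots A_n})$ (so $\tau_{A_1|A_n}=\tau_{A_1A_n}$). (1) Let $n\geq 4$ and $2\leq m\leq n-2$. If $k\tau^r_{A_1A_i}\leq \tau^r_{A_1|A_{i+1}\cdots A_n}$ for $i=2,\dots,m$ and $\tau^r_{A_1A_j}\geq k\tau^r_{A_1|A_{j+1}\cdots A_n}$ for $j=m+1,\dots,n-1$, then $$\tau^\alpha_{A_1|A_2\cdots A_n}\geq p^{\alpha/r}\big(\tau^\alpha_{A_1A_2}+l\tau^\alpha_{A_1A_3}+\cdots+l^{m-2}\tau^\alpha_{A_1A_m}\big)+l^m\big[\tau^\alpha_{A_1A_{m+1}}+p^{\alpha/r}\tau^\alpha_{A_1A_{m+2}}+\cdots+p^{(n-m-2)\alpha/r}\tau^\alpha_{A_1A_{n-1}}\big]+l^{m-1}p^{(n-m-1)\alpha/r}\tau^\alpha_{A_1A_n}.$$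 (2) Let $n\geq 3$. If $k\tau^r_{A_1A_i}\leq \tau^r_{A_1|A_{i+1}\cdots A_n}$ for $i=2,\dots,n-1$, then $$\tau^\alpha_{A_1|A_2\cdots A_n}\geq p^{\alpha/r}\big(\tau^\alpha_{A_1A_2}+l\tau^\alpha_{A_1A_3}+\cdots+l^{n-3}\tau^\alpha_{A_1A_{n-1}}\big)+l^{n-2}\tau^\alpha_{A_1A_n}.$$ (3) Let $n\geq 3$. If $\tau^r_{A_1A_j}\geq k\tau^r_{A_1|A_{j+1}\cdots A_n}$ for $j=2,\dots,n-1$, then $$\tau^\alpha_{A_1|A_2\cdots A_n}\geq l\big(\tau^\alpha_{A_1A_2}+p^{\alpha/r}\tau^\alpha_{A_1A_3}+\cdots+p^{(n-3)\alpha/r}\tau^\alpha_{A_1A_{n-1}}\big)+p^{(n-2)\alpha/r}\tau^\alpha_{A_1A_n}.$$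
   Context: $\rho_{A_1A_i}$ is the reduced state of $\rho_{A_1\cdots A_n}$ on $A_1A_i$; $\rho_{A_1|A_{j+1}\cdots A_n}$ is the reduced state on $A_1A_{j+1}\cdots A_n$ regarded as a bipartite state for the bipartition $A_1$ versus $A_{j+1}\cdots A_n$; $\rho_{X_1|X_2\cdots X_N}$ similarly denotes the bipartite cut $X_1$ versus $X_2\cdots X_N$. Examples of such $\tau$ mentioned by the paper are the squared concurrence and the squared convex-roof extended negativity. *)

(* Defs.v *)
From HB Require Import structures.
From mathcomp Require Import all_boot all_order all_algebra.
From mathcomp Require Import reals.
From mathcomp Require Import exp.
From mathcomp.real_closed Require Import complex.
Set Implicit Arguments. Unset Strict Implicit. Unset Printing Implicit Defensive.
Import Order.TTheory GRing.Theory Num.Theory.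
Local Open Scope ring_scope.

Definition op (R : realType) (T : finType) := T -> T -> R[i].

Definition is_state (R : realType) (T : finType) (rho : op R T) : Prop :=
  (forall v : T -> R[i],
      0 <= \sum_(s : T) \sum_(t : T) ((v s)^* * rho s t * v t)) /\
  \sum_(s : T) rho s s = 1.

(* A multipartite system: parties indexed by a finite type I, party i has
   (finite) basis A i; joint basis = configurations. *)
Definition config (I : finType) (A : I -> finType) := {dffun forall i : I, A i}.

(* Basis of the composite subsystem formed by grouping the parties in S. *)
Definition subsys (I : finType) (A : I -> finType) (S : {set I}) :=
  {dffun forall j : {i : I | i \in S}, A (val j)}.

(* reduced state of rho on party x and the group S, regarded as the bipartite
   state for the cut  x | S  (partial trace over all other parties) *)
Definition reduced (R : realType) (I : finType) (A : I -> finType)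
    (rho : op R (config A)) (x : I) (S : {set I}) :
    op R (A x * subsys A S)%type :=
  fun ab ab' =>
    \sum_(c : config A | (c x == ab.1) &&
                          [forall j : {i : I | i \in S}, c (val j) == ab.2 j])
    \sum_(c' : config A | (c' x == ab'.1) &&
                          [forall j : {i : I | i \in S}, c' (val j) == ab'.2 j] &&
                          [forall i : I, ((i != x) && (i \notin S)) ==> (c i == c' i)])
      rho c c'.
Arguments reduced {R I A} rho x S _ _.

Definition bimeasure (R : realType) :=
  forall (X Y : finType), op R (X * Y)%type -> R.

Definition nonneg_measure (R : realType) (tau : bimeasure R) : Prop :=
  forall (X Y : finType) (rho : op R (X * Y)%type), is_state rho -> 0 <= tau X Y rho.

Definition monogamous (R : realType) (tau : bimeasure R) : Prop :=
  forall (I : finType) (A : I -> finType) (rho : op R (config A)),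
    is_state rho ->
    forall (x : I) (K : nat) (G : 'I_K -> {set I}),
      (forall k, (0 < #|G k|)%N) ->
      (forall k, x \notin G k) ->
      (forall k k', k != k' -> [disjoint G k & G k']) ->
      \sum_(k < K) tau _ _ (reduced rho x (G k))
        <= tau _ _ (reduced rho x (\bigcup_(k < K) G k)).

(* n-partite state with parties A_1,...,A_n indexed by 'I_n (A_i has index i-1) *)
(* group {A_i} (1-based paper index i) *)
Definition party (n : nat) (i : nat) : {set 'I_n} := [set t : 'I_n | val t == i.-1].
(* group A_{j+1} ... A_n *)
Definition tailp (n : nat) (j : nat) : {set 'I_n} := [set t : 'I_n | j <= val t]%N.

Definition tau2 (R : realType) (tau : bimeasure R) (n : nat) (A : 'I_n -> finType)
  (rho : op R (config A)) (a1 : 'I_n) (i : nat) : R :=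
  tau _ _ (reduced rho a1 (party n i)).
Definition tauT (R : realType) (tau : bimeasure R) (n : nat) (A : 'I_n -> finType)
  (rho : op R (config A)) (a1 : 'I_n) (j : nat) : R :=
  tau _ _ (reduced rho a1 (tailp n j)).
Arguments tau2 {R} tau {n A} rho a1 i.
Arguments tauT {R} tau {n A} rho a1 j.

(* Main.v *)
Require Import Defs.
From HB Require Import structures.
From mathcomp Require Import all_boot all_order all_algebra.
From mathcomp Require Import reals exp.
From mathcomp.real_closed Require Import complex.
From mathcomp Require boolp classical_sets topology normedtype derive realfun.
From mathcomp Require Import ring lra zify.
Import Order.TTheory GRing.Theory Num.Theory.
Local Open Scope ring_scope.

Module AnaPart.
Import boolp classical_sets topology normedtype derive realfun.
Import numFieldNormedType.Exports.
Local Open Scope ring_scope.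
Section An.
Variable R : realType.

Lemma dphi (b p c : R) : 0 < c ->
  is_derive c 1 (fun x : R => powR (x + 1) b - powR p b * powR x b)
    (b * powR (c + 1) (b - 1) - powR p b * (b * powR c (b - 1))).
Proof.
move=> c0.
have hp : is_derive (shift (1:R) c) 1 (fun x : R => powR x b) (b * powR (c + 1) (b - 1)).
    apply: is_derive1_powR; rewrite /= ltr_wpDr //; exact: ltW.
  have h1 := is_derive1_comp hp (is_derive_shift c 1 1).
rewrite mulr1 in h1.
have h2 : is_derive c 1 (fun x : R => powR x b) (b * powR c (b - 1)).
  exact: is_derive1_powR.
have := is_deriveD h1 (is_deriveN (is_deriveZ (powR p b) h2)).
by [].
Qed.

Lemma dphi_le0 (b c p : R) : 0 < c -> c <= 1 -> 0 <= b -> b <= 1/2 -> 1/2 <= p ->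
  b * powR (c + 1) (b - 1) - powR p b * (b * powR c (b - 1)) <= 0.
Proof.
move=> c0 c1 b0 b12 p12.
rewrite subr_le0 mulrCA ler_wpM2l //.
have q2 : 2 <= (c + 1) / c.
  rewrite ler_pdivlMr //; lra.
have -> : c + 1 = ((c + 1) / c) * c by rewrite divfK // gt_eqF.
have q0 : 0 <= (c + 1) / c by apply: le_trans q2; lra.
rewrite powRM //; last exact: ltW.
rewrite ler_wpM2r ?powR_ge0 //.
have e1 : ((c + 1) / c) `^ (b - 1) <= 2 `^ (b - 1).
  have -> : b - 1 = - (1 - b) by ring.
  rewrite !powRN lef_pV2 ?posrE ?powR_gt0 //; last by apply: lt_le_trans q2; lra.
  by apply: ge0_ler_powR => //; rewrite ?nnegrE //; lra.
apply: le_trans e1 _.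
have e2 : 2 `^ (b - 1) <= 2 `^ (- b) by apply: ler_powR; lra.
apply: le_trans e2 _.
have e3 : 2 `^ (- b) = (2^-1) `^ b.
  have h2b : (2:R) `^ b != 0 by rewrite gt_eqF // powR_gt0 //; lra.
  rewrite powRN; apply: (mulfI h2b); rewrite -powRM ?divff ?powR1 //; try lra.
rewrite e3; apply: ge0_ler_powR => //; rewrite ?nnegrE; lra.
Qed.

Lemma phi_mono (b p v w : R) : 0 < v -> v <= w -> w <= 1 -> 0 <= b -> b <= 1/2 -> 1/2 <= p ->
  powR (w + 1) b - powR p b * powR w b <= powR (v + 1) b - powR p b * powR v b.
Proof.
move=> v0 vw w1 b0 b12 p12.
set f := fun x : R => powR (x + 1) b - powR p b * powR x b.
have := @MVT_segment R f (fun c => b * powR (c + 1) (b - 1) - powR p b * (b * powR c (b - 1))) v w vw.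
case.
- move=> x; rewrite in_itv /= => /andP[vx _]; exact: (dphi b p x (lt_trans v0 vx)).
- apply: derivable_within_continuous => x; rewrite in_itv /= => /andP[vx _].
  by have [] := dphi b p x (lt_le_trans v0 vx).
- move=> c; rewrite in_itv /= => /andP[vc cw] E.
  rewrite -subr_le0 -/(f w) -/(f v) E; apply: mulr_le0_ge0; last by rewrite subr_ge0.
  apply: dphi_le0 => //; [exact: lt_le_trans vc | exact: le_trans w1].
Qed.

Lemma powR_inv (k b : R) : 0 < k -> powR (k^-1) b = (powR k b)^-1.
Proof.
move=> k0; apply: (@mulfI _ (powR k b)); first by rewrite gt_eqF // powR_gt0.
rewrite -powRM ?divff ?powR1 ?mulfV //; try exact: ltW; rewrite ?gt_eqF ?powR_gt0 //.
by rewrite invr_ge0 ltW.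
Qed.

Lemma l_eq (k p b : R) : 0 < k ->
  (powR (1 + k) b - powR p b) / powR k b =
  powR (k^-1 + 1) b - powR p b * powR (k^-1) b.
Proof.
move=> k0.
have -> : 1 + k = k * (k^-1 + 1) by rewrite mulrDr mulfV ?gt_eqF // mulr1 addrC.
rewrite powRM ?powR_inv //; try exact: ltW; last by rewrite addr_ge0 // invr_ge0 ltW.
have : powR k b != 0 by rewrite gt_eqF // powR_gt0.
move=> h; field; done.
Qed.

Lemma phi_le1 (p b v : R) : 0 < v -> v <= 1 -> 1/2 <= p -> p <= 1 -> 0 <= b -> b <= 1/2 ->
  powR (v + 1) b - powR p b * powR v b <= 1.
Proof.
move=> v0 v1 p12 p1 b0 b12.
have e1 : powR (v + 1) b <= powR (v + 1) (2^-1) by apply: ler_powR; lra.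
have pv0 : 0 < p * v by apply: mulr_gt0 => //; lra.
have pv1 : p * v <= 1 by nra.
have e2 : powR (p * v) (2^-1) <= powR (p * v) b by apply: ger_powR; rewrite ?pv0 ?pv1 //; lra.
rewrite !powR12_sqrt in e1 e2; try lra.
rewrite powRM in e2; try lra.
set s := Num.sqrt (v + 1) in e1; set t := Num.sqrt (p * v) in e2.
have s0 : 0 <= s by rewrite sqrtr_ge0.
have t0 : 0 <= t by rewrite sqrtr_ge0.
have ss : s * s = v + 1 by rewrite -expr2 sqr_sqrtr //; lra.
have tt : t * t = p * v by rewrite -expr2 sqr_sqrtr //; lra.
have t1 : t <= 1 by rewrite -sqrtr1 ler_sqrt //; lra.
have st : s <= 1 + t by nra.
lra.
Qed.

Lemma l_le1 (k p b : R) : 1 <= k -> 1/2 <= p -> p <= 1 -> 0 <= b -> b <= 1/2 ->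
  (powR (1 + k) b - powR p b) / powR k b <= 1.
Proof.
move=> k1 p12 p1 b0 b12.
have k0 : 0 < k by lra.
rewrite l_eq //; apply: phi_le1 => //; by rewrite ?invr_gt0 ?invf_le1.
Qed.

Lemma core (k p b A B : R) : 1 <= k -> 1/2 <= p -> p <= 1 -> 0 <= b -> b <= 1/2 ->
  0 <= A -> 0 <= B -> k * A <= B ->
  powR p b * powR A b + (powR (1 + k) b - powR p b) / powR k b * powR B b
    <= powR (A + B) b.
Proof.
move=> k1 p12 p1 b0 b12 A0 B0 kAB.
have k0 : 0 < k by lra.
have [->|bpos] := eqVneq b 0.
  by rewrite !powRr0 subrr mul0r mulr1 mul0r addr0.
have [->|Apos] := eqVneq A 0.
  rewrite powR0 // mulr0 add0r add0r ler_piMl ?powR_ge0 //.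
  exact: l_le1.
have Ap : 0 < A by rewrite lt_def Apos.
have Bp : 0 < B by apply: lt_le_trans kAB; rewrite mulr_gt0 //.
set v := A / B.
have v0 : 0 < v by rewrite divr_gt0.
have vw : v <= k^-1 by rewrite /v ler_pdivrMr // -(ler_pM2l k0) mulrA mulfV ?gt_eqF // mul1r.
have kw : k^-1 <= 1 by rewrite invf_le1.
have hm := phi_mono b p v (k^-1) v0 vw kw b0 b12 p12.
rewrite -l_eq // in hm.
have eA : A = B * v by rewrite /v mulrCA divff ?gt_eqF // mulr1.
clearbody v; rewrite eA.
have -> : B * v + B = B * (v + 1) by rewrite mulrDr mulr1.
rewrite !powRM; try lra; try exact: ltW.
set L := (_ / _) in hm *.
set Bb := powR B b.
have Bb0 : 0 <= Bb := powR_ge0 _ _.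
nra.
Qed.

Lemma powR_superadd (r a c : R) : 1 <= r -> 0 <= a -> 0 <= c ->
  powR a r + powR c r <= powR (a + c) r.
Proof.
move=> r1 a0 c0.
have rn0 : r != 0 by rewrite gt_eqF //; lra.
have [->|an] := eqVneq a 0; first by rewrite powR0 // !add0r.
have [->|cn] := eqVneq c 0; first by rewrite powR0 // !addr0.
have ap : 0 < a by rewrite lt_def an.
have cp : 0 < c by rewrite lt_def cn.
set s := a + c.
have sp : 0 < s by rewrite /s; lra.
have ea : a = (a / s) * s by rewrite divfK ?gt_eqF.
have ec : c = (c / s) * s by rewrite divfK ?gt_eqF.
have h1 : powR (a / s) r <= a / s.
  apply: ge1r_powR => //; rewrite divr_gt0 //= ler_pdivrMr // mul1r /s; lra.
have h2 : powR (c / s) r <= c / s.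
  apply: ge1r_powR => //; rewrite divr_gt0 //= ler_pdivrMr // mul1r /s; lra.
have Ea : powR a r = powR (a / s) r * powR s r.
  by rewrite -powRM ?divfK ?gt_eqF // ?divr_ge0 // ltW.
have Ec : powR c r = powR (c / s) r * powR s r.
  by rewrite -powRM ?divfK ?gt_eqF // ?divr_ge0 // ltW.
rewrite Ea Ec.
have hs : a / s + c / s = 1 by rewrite -mulrDl divff ?gt_eqF.
have S0 : 0 <= powR s r := powR_ge0 _ _.
nra.
Qed.

Lemma step (k p r al T a c : R) : 1 <= k -> 1/2 <= p -> p <= 1 -> 2 <= r ->
  0 <= al -> al <= r / 2 -> 0 <= a -> 0 <= c -> a + c <= T ->
  k * powR a r <= powR c r ->
  powR p (al / r) * powR a al +
  (powR (1 + k) (al / r) - powR p (al / r)) / powR k (al / r) * powR c al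
    <= powR T al.
Proof.
move=> k1 p12 p1 r2 al0 alr a0 c0 acT kac.
have r0 : 0 < r by lra.
have ee : forall x, powR x al = powR (powR x r) (al / r).
  by move=> x; rewrite -powRrM mulrCA divff ?gt_eqF // mulr1.
have b0 : 0 <= al / r by rewrite divr_ge0 // ltW.
have b12 : al / r <= 1/2 by rewrite ler_pdivrMr //; lra.
apply: le_trans (_ : powR (a + c) al <= _); last first.
  apply: ge0_ler_powR => //; rewrite nnegrE; lra.
rewrite !(ee a) (ee c) (ee (a + c)).
have H := @core k p (al / r) (powR a r) (powR c r) k1 p12 p1 b0 b12 (powR_ge0 a r) (powR_ge0 c r) kac. apply: le_trans H _.
apply: ge0_ler_powR => //; rewrite ?nnegrE ?addr_ge0 ?powR_ge0 //.
by apply: powR_superadd => //; lra.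
Qed.

Lemma l_ge0 (k p r al : R) : 1 <= k -> 1/2 <= p -> p <= 1 -> 2 <= r -> 0 <= al ->
  0 <= (powR (1 + k) (al / r) - powR p (al / r)) / powR k (al / r).
Proof.
move=> k1 p12 p1 r2 al0.
have b0 : 0 <= al / r by rewrite divr_ge0 //; lra.
rewrite divr_ge0 ?powR_ge0 // subr_ge0.
have e : (1:R) = powR 1 (al / r) by rewrite powR1.
apply: (@le_trans _ _ 1).
  by rewrite [X in _ <= X]e ge0_ler_powR // nnegrE; lra.
by rewrite [X in X <= _]e ge0_ler_powR // ?nnegrE; lra.
Qed.

Lemma chainA (k p r al : R) (n : nat) (t T : nat -> R) :
  1 <= k -> 1/2 <= p -> p <= 1 -> 2 <= r -> 0 <= al -> al <= r / 2 ->
  (forall i, 0 <= t i) -> (forall i, 0 <= T i) ->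
  (forall j, (1 <= j)%N -> (j <= n - 2)%N -> t j.+1 + T j.+1 <= T j) ->
  let l := (powR (1 + k) (al / r) - powR p (al / r)) / powR k (al / r) in
  forall q, (1 <= q)%N -> (q <= n - 1)%N ->
  (forall i, (2 <= i)%N -> (i <= q)%N -> k * powR (t i) r <= powR (T i) r) ->
  powR p (al / r) * (\sum_(2 <= i < q.+1) l ^+ (i - 2) * powR (t i) al) + l ^+ (q - 1) * powR (T q) al
    <= powR (T 1%N) al.
Proof.
move=> k1 p12 p1 r2 al0 alr t0 T0 mono l.
have l0 : 0 <= l by apply: l_ge0.
elim => [//|q IH] _ qn H.
have [q0|qpos] := eqVneq q 0%N.
  by rewrite q0 big_geq // mulr0 add0r expr0 mul1r.
have qp : (1 <= q)%N by rewrite lt0n.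
have IH' := IH qp (ltnW qn) (fun i h1 h2 => H i h1 (leq_trans h2 (leqnSn q))).
rewrite big_nat_recr /=; last by rewrite ltnS.
have st := @step k p r al (T q) (t q.+1) (T q.+1) k1 p12 p1 r2 al0 alr (t0 _) (T0 _)
  (mono q qp ltac:(lia)) (H q.+1 ltac:(lia) (leqnn _)).
have e1 : (q.+1 - 2 = q - 1)%N by lia.
have e2 : (q.+1 - 1 = (q - 1).+1)%N by lia.
rewrite e1 e2 exprS.
have lq0 : 0 <= l ^+ (q - 1) by rewrite exprn_ge0.
set P := powR p (al / r) in st IH' *.
set S := \sum_(_ <= _ < _) _ in IH' *.
rewrite -/l in st.
have := ler_wpM2l lq0 st.
nra.
Qed.

Lemma chainB (k p r al : R) (n : nat) (t T : nat -> R) :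
  1 <= k -> 1/2 <= p -> p <= 1 -> 2 <= r -> 0 <= al -> al <= r / 2 ->
  (forall i, 0 <= t i) -> (forall i, 0 <= T i) ->
  (forall j, (1 <= j)%N -> (j <= n - 2)%N -> t j.+1 + T j.+1 <= T j) ->
  let l := (powR (1 + k) (al / r) - powR p (al / r)) / powR k (al / r) in
  forall s d, (1 <= s)%N -> (s + d <= n - 1)%N ->
  (forall j, (s < j)%N -> (j <= s + d)%N -> k * powR (T j) r <= powR (t j) r) ->
  l * (\sum_(s.+1 <= j < (s + d).+1) powR p (al / r) ^+ (j - s.+1) * powR (t j) al)
    + powR p (al / r) ^+ d * powR (T (s + d)%N) al
    <= powR (T s) al.
Proof.
move=> k1 p12 p1 r2 al0 alr t0 T0 mono l s.
have l0 : 0 <= l by apply: l_ge0.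
set P := powR p (al / r).
have P0 : 0 <= P by apply: powR_ge0.
elim => [|d IH] s1 sdn H.
  by rewrite !addn0 big_geq // mulr0 add0r expr0 mul1r.
have h1 : (s + d <= n - 1)%N by clear -sdn; lia.
have h2 : (s + d <= s + d.+1)%N by clear; lia.
have IH' := IH s1 h1 (fun j j1 j2 => H j j1 (leq_trans j2 h2)).
rewrite addnS big_nat_recr /=; last by rewrite ltnS leq_addr.
have h3 : (1 <= s + d)%N by clear -s1; lia.
have h4 : (s + d <= n - 2)%N by clear -sdn; lia.
have m1 : t (s + d).+1 + T (s + d).+1 <= T (s + d)%N by apply: mono.
have m2 : T (s + d).+1 + t (s + d).+1 <= T (s + d)%N by rewrite addrC.
have h5 : (s < (s + d).+1)%N by clear; lia.
have h6 : ((s + d).+1 <= s + d.+1)%N by clear; lia.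
have st := @step k p r al (T (s + d)%N) (T (s + d).+1) (t (s + d).+1) k1 p12 p1 r2 al0 alr (T0 _) (t0 _)
  m2 (H (s + d).+1 h5 h6).
have e1 : ((s + d).+1 - s.+1 = d)%N by clear; lia.
rewrite e1 exprS.
have Pd0 : 0 <= P ^+ d by rewrite exprn_ge0.
set S := \sum_(_ <= _ < _) _ in IH' *.
rewrite -/l -/P in st.
have X := ler_wpM2l Pd0 st.
apply: le_trans IH'; rewrite mulrDr -addrA lerD2l.
apply: le_trans X; rewrite le_eqVlt; apply/orP; left; apply/eqP; rewrite /l; ring.
Qed.
End An.

End AnaPart.
Import AnaPart.

Section St.
Variables (R : realType) (I : finType) (A : I -> finType) (rho : op R (config A)) (x : I) (S : {set I}).

Definition proj (c : config A) : (A x * subsys A S)%type :=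
  (c x, @finfun _ (fun j : {i : I | i \in S} => A (val j)) (fun j => c (val j))).

Definition mt (c : config A) (ab : (A x * subsys A S)%type) : bool :=
  (c x == ab.1) && [forall j : {i : I | i \in S}, c (val j) == ab.2 j].

Definition env (c c' : config A) : bool :=
  [forall i : I, ((i != x) && (i \notin S)) ==> (c i == c' i)].

Lemma reducedE ab ab' : reduced rho x S ab ab' =
  \sum_(c | mt c ab) \sum_(c' | mt c' ab' && env c c') rho c c'.
Proof. by []. Qed.

Lemma mtE c ab : mt c ab = (ab == proj c).
Proof.
case: ab => a b; rewrite /mt /proj /= xpair_eqE eq_sym; congr (_ && _).
apply/forallP/eqP => [H|->].
  by apply/ffunP => j; rewrite ffunE; apply/eqP; rewrite eq_sym.
by move=> j; rewrite ffunE.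
Qed.

Lemma sum_proj (F : (A x * subsys A S)%type -> config A -> R[i]) :
  \sum_ab \sum_(c | mt c ab) F ab c = \sum_c F (proj c) c.
Proof.
rewrite (exchange_big_dep xpredT) //=; apply: eq_bigr => c _.
rewrite (big_pred1 (proj c)) // => ab; by rewrite /= mtE.
Qed.


Lemma env_refl c : env c c.
Proof. by apply/forallP => i; apply/implyP. Qed.

Lemma env_sym c c' : env c c' = env c' c.
Proof.
by apply/forallP/forallP => H i; apply/implyP => h; rewrite eq_sym (implyP (H i) h).
Qed.

Lemma env_trans c1 c2 c3 : env c1 c2 -> env c2 c3 -> env c1 c3.
Proof.
move=> /forallP H1 /forallP H2; apply/forallP => i; apply/implyP => h.
by rewrite (eqP (implyP (H1 i) h)) (implyP (H2 i) h).
Qed.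

Lemma only c c' : mt c' (proj c) && env c c' = (c' == c).
Proof.
apply/andP/eqP => [[]|->]; last by rewrite mtE eqxx env_refl.
rewrite mtE /proj => /eqP [e1 e2] /forallP e3.
apply/ffunP => i.
have [->|nx] := eqVneq i x; first by rewrite e1.
have [iS|niS] := boolP (i \in S).
  move/ffunP: e2 => /(_ (exist _ i iS)); rewrite !ffunE /= => ->.
  by [].
by apply/esym/eqP; apply: (implyP (e3 i)); rewrite nx niS.
Qed.

Lemma trace_red : \sum_ab reduced rho x S ab ab = \sum_c rho c c.
Proof.
under eq_bigr => ab _ do rewrite reducedE.
rewrite (sum_proj (fun ab c => \sum_(c' | mt c' ab && env c c') rho c c')).
apply: eq_bigr => c _.
by rewrite (big_pred1 c) // => c'; rewrite /= only.
Qed.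


Lemma quad_red (v : (A x * subsys A S)%type -> R[i]) :
  \sum_ab \sum_ab' ((v ab)^* * reduced rho x S ab ab' * v ab') =
  \sum_c \sum_c' (if env c c' then (v (proj c))^* * rho c c' * v (proj c') else 0).
Proof.
transitivity (\sum_ab \sum_(c | mt c ab) \sum_ab' \sum_(c' | mt c' ab')
   (if env c c' then (v ab)^* * rho c c' * v ab' else 0)).
  apply: eq_bigr => ab _.
  rewrite exchange_big /=.
  apply: eq_bigr => ab' _.
  rewrite reducedE mulr_sumr mulr_suml.
  apply: eq_bigr => c _.
  rewrite big_mkcondr mulr_sumr mulr_suml /=.
  apply: eq_bigr => c' _.
  by case: ifP => _; rewrite ?mulr0 ?mul0r.
rewrite (sum_proj (fun ab c => \sum_ab' \sum_(c' | mt c' ab')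
   (if env c c' then (v ab)^* * rho c c' * v ab' else 0))).
apply: eq_bigr => c _.
exact: (sum_proj (fun ab' c' => if env c c' then (v (proj c))^* * rho c c' * v ab' else 0)).
Qed.


Definition Nc (c : config A) : nat := #|[pred c0 | env c c0]|.

Lemma Nc_gt0 c : (0 < Nc c)%N.
Proof. by apply/card_gt0P; exists c; rewrite inE env_refl. Qed.

Lemma Nc_eq c c0 : env c c0 -> Nc c0 = Nc c.
Proof.
move=> h; apply: eq_card => c1; rewrite !inE.
apply/idP/idP => h1; first exact: env_trans h h1.
by apply: env_trans h1; rewrite env_sym.
Qed.

Lemma weight c c' :
  \sum_c0 (if env c0 c && env c0 c' then ((Nc c0)%:R : R[i])^-1 else 0) =
  if env c c' then 1 else 0.
Proof.
case: ifP => hcc.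
  transitivity (\sum_(c0 | env c c0) ((Nc c)%:R : R[i])^-1).
    rewrite [RHS]big_mkcond; apply: eq_bigr => c0 _.
    rewrite [env c0 c]env_sym.
    have [h|h] := boolP (env c c0); last by rewrite andFb.
    have hc0 : env c0 c' by apply: (@env_trans c0 c c') => //; rewrite env_sym.
    by rewrite andTb hc0 (@Nc_eq c c0 h).
  rewrite sumr_const (_ : #|_| = Nc c); last by apply: eq_card => c0; rewrite !inE.
  rewrite -[_ *+ Nc c]mulr_natr mulVf //.
  by rewrite pnatr_eq0 -lt0n Nc_gt0.
apply: big1 => c0 _; case: ifP => // /andP [h1 h2].
by move: hcc; rewrite (@env_trans c c0 c') // env_sym.
Qed.


Lemma reduced_state : is_state rho -> is_state (reduced rho x S).
Proof.
case=> psd tr; split; last by rewrite trace_red.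
move=> v; rewrite quad_red.
set w := fun c => v (proj c).
pose wc (c0 c : config A) := if env c0 c then w c else 0.
have E : \sum_c \sum_c' (if env c c' then (w c)^* * rho c c' * w c' else 0) =
  \sum_c0 ((Nc c0)%:R : R[i])^-1 * \sum_c \sum_c' ((wc c0 c)^* * rho c c' * wc c0 c').
  transitivity (\sum_c \sum_c' \sum_c0 ((Nc c0)%:R : R[i])^-1 *
      ((wc c0 c)^* * rho c c' * wc c0 c')); last first.
    symmetry.
    transitivity (\sum_c0 \sum_c \sum_c' ((Nc c0)%:R : R[i])^-1 *
      ((wc c0 c)^* * rho c c' * wc c0 c')).
      apply: eq_bigr => c0 _; rewrite mulr_sumr; apply: eq_bigr => c _.
      by rewrite mulr_sumr.
    rewrite exchange_big; apply: eq_bigr => c _.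
    by rewrite exchange_big.
  apply: eq_bigr => c _; apply: eq_bigr => c' _.
  transitivity ((w c)^* * rho c c' * w c' *
     \sum_c0 (if env c0 c && env c0 c' then ((Nc c0)%:R : R[i])^-1 else 0)).
    by rewrite weight; case: ifP; rewrite ?mulr1 ?mulr0.
  rewrite mulr_sumr; apply: eq_bigr => c0 _; rewrite /wc.
  case: (env c0 c); case: (env c0 c'); rewrite /= ?conjC0 ?mulr0 ?mul0r ?mulr0 //.
  by rewrite mulrC.
rewrite E; apply: sumr_ge0 => c0 _; apply: mulr_ge0; first by rewrite invr_ge0 ler0n.
exact: psd.
Qed.

End St.

Lemma tau_nonneg (R : realType) (tau : bimeasure R) (tau_ge0 : nonneg_measure tau)
  (I : finType) (A : I -> finType) (rho : op R (config A)) (rho_state : is_state rho)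
  (x : I) (S : {set I}) : 0 <= tau _ _ (reduced rho x S).
Proof. by apply: tau_ge0; apply: reduced_state. Qed.

Lemma tau_chain (R : realType) (tau : bimeasure R) (tau_mono : monogamous tau)
  (n : nat) (A : 'I_n -> finType) (rho : op R (config A)) (rho_state : is_state rho)
  (a1 : 'I_n) (a1_first : nat_of_ord a1 = 0%N) (j : nat) :
  (1 <= j)%N -> (j <= n - 2)%N ->
  tau2 tau rho a1 j.+1 + tauT tau rho a1 j.+1 <= tauT tau rho a1 j.
Proof.
move=> j1 jn.
pose G := fun k : 'I_2 => if val k == 0%N then party n j.+1 else tailp n j.+1.
have := tau_mono _ _ _ rho_state a1 2%N G.
have jlt : (j < n)%N by lia.
have nlt : (n.-1 < n)%N by lia.
have H1 : forall k, (0 < #|G k|)%N.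
  move=> k; apply/card_gt0P; rewrite /G; case: ifP => _.
    by exists (Ordinal jlt); rewrite inE /=.
  by exists (Ordinal nlt); rewrite inE /=; lia.
have H2 : forall k, a1 \notin G k.
  by move=> k; rewrite /G; case: ifP => _; rewrite inE /= a1_first; lia.
have H3 : forall k k', k != k' -> [disjoint G k & G k'].
  move=> k k' kk; rewrite -setI_eq0; apply/eqP/setP => t; rewrite !inE /G.
  case: k kk => [[|[|//]] ?]; case: k' => [[|[|//]] ?] //= _; rewrite !inE; lia.
move=> /(_ H1 H2 H3).
have -> : \bigcup_(k < 2) G k = tailp n j.
  apply/setP => t; rewrite big_ord_recl big_ord1 /G /= /party /tailp !inE; lia.
by rewrite big_ord_recl big_ord1.
Qed.

Lemma tau_last (R : realType) (tau : bimeasure R)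
  (n : nat) (A : 'I_n -> finType) (rho : op R (config A)) (a1 : 'I_n) :
  tauT tau rho a1 (n - 1)%N = tau2 tau rho a1 n.
Proof.
rewrite /tauT /tau2.
have -> : tailp n (n - 1) = party n n.
  apply/setP => t; rewrite /party /tailp !inE /=.
  have := ltn_ord t; rewrite /=; lia.
by [].
Qed.

Lemma powR_nat (R : realType) (p b : R) (j : nat) : 0 <= p ->
  powR p (j%:R * b) = powR p b ^+ j.
Proof.
by move=> p0; rewrite mulrC powRrM powR_mulrn // powR_ge0.
Qed.

Theorem corollary1 (R : realType) (tau : bimeasure R)
  (tau_ge0 : nonneg_measure tau) (tau_mono : monogamous tau)
  (n : nat) (A : 'I_n -> finType) (rho : op R (config A)) (rho_state : is_state rho)
  (a1 : 'I_n) (a1_first : nat_of_ord a1 = 0%N)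
  (k p r alpha : R) (hk : 1 <= k) (hp1 : 1 / 2 <= p) (hp2 : p <= 1)
  (hr : 2 <= r) (ha1 : 0 <= alpha) (ha2 : alpha <= r / 2) :
  let l := (powR (1 + k) (alpha / r) - powR p (alpha / r)) / powR k (alpha / r) in
  let t2 := tau2 tau rho a1 in
  let tT := tauT tau rho a1 in
  (* (1) *)
  ((4 <= n)%N -> forall m : nat, (2 <= m)%N -> (m <= n - 2)%N ->
     (forall i : nat, (2 <= i)%N -> (i <= m)%N ->
        k * powR (t2 i) r <= powR (tT i) r) ->
     (forall j : nat, (m + 1 <= j)%N -> (j <= n - 1)%N ->
        powR (t2 j) r >= k * powR (tT j) r) ->
     powR (tT 1%N) alpha >=
       powR p (alpha / r) *
         (\sum_(2 <= i < m.+1) l ^+ (i - 2) * powR (t2 i) alpha)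
       + l ^+ m *
         (\sum_(m.+1 <= j < n) powR p ((j - m.+1)%:R * (alpha / r)) * powR (t2 j) alpha)
       + l ^+ (m - 1) * powR p ((n - m - 1)%:R * (alpha / r)) * powR (t2 n) alpha)
  /\
  (* (2) *)
  ((3 <= n)%N ->
     (forall i : nat, (2 <= i)%N -> (i <= n - 1)%N ->
        k * powR (t2 i) r <= powR (tT i) r) ->
     powR (tT 1%N) alpha >=
       powR p (alpha / r) *
         (\sum_(2 <= i < n) l ^+ (i - 2) * powR (t2 i) alpha)
       + l ^+ (n - 2) * powR (t2 n) alpha)
  /\
  (* (3) *)
  ((3 <= n)%N ->
     (forall j : nat, (2 <= j)%N -> (j <= n - 1)%N ->
        powR (t2 j) r >= k * powR (tT j) r) ->
     powR (tT 1%N) alpha >=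
       l * (\sum_(2 <= j < n) powR p ((j - 2)%:R * (alpha / r)) * powR (t2 j) alpha)
       + powR p ((n - 2)%:R * (alpha / r)) * powR (t2 n) alpha).
Proof.
move=> l t2 tT.
have t0 : forall i, 0 <= t2 i by move=> i; exact: tau_nonneg.
have T0 : forall i, 0 <= tT i by move=> i; exact: tau_nonneg.
have mono : forall j, (1 <= j)%N -> (j <= n - 2)%N -> t2 j.+1 + tT j.+1 <= tT j.
  by move=> j j1 jn; exact: tau_chain.
have n1 : (1 <= n)%N by case: (a1) => i ilt; clear -ilt; lia.
have last : tT (n - 1)%N = t2 n by exact: tau_last.
have p0 : 0 <= p by apply: le_trans hp1; rewrite divr_ge0 // ler0n.
have l0 : 0 <= l by apply: l_ge0.
have hA := @chainA R k p r alpha n t2 tT hk hp1 hp2 hr ha1 ha2 t0 T0 mono.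
have hB := @chainB R k p r alpha n t2 tT hk hp1 hp2 hr ha1 ha2 t0 T0 mono.
rewrite -/l in hA hB.
split; [|split].
- move=> n4 m m2 mn Hi Hj.
  have f1 : (1 <= m)%N by clear -m2; lia.
  have f2 : (m <= n - 1)%N by clear -mn; lia.
  have f3 : (m + (n - 1 - m) <= n - 1)%N by clear -mn; lia.
  have f4 : forall j, (m < j)%N -> (j <= m + (n - 1 - m))%N -> (m + 1 <= j)%N /\ (j <= n - 1)%N.
    by clear -mn; move=> j; lia.
  have := hA m f1 f2 Hi.
  have := hB m (n - 1 - m)%N f1 f3 (fun j h1 h2 => Hj j (proj1 (f4 j h1 h2)) (proj2 (f4 j h1 h2))).
  have -> : (m + (n - 1 - m))%N = (n - 1)%N by clear -mn; lia.
  rewrite last (_ : (n - 1).+1 = n)%N; last by clear -n1; lia.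
  move=> HB HA.
  have eS : \sum_(m.+1 <= j < n) powR p ((j - m.+1)%:R * (alpha / r)) * powR (t2 j) alpha
    = \sum_(m.+1 <= j < n) powR p (alpha / r) ^+ (j - m.+1) * powR (t2 j) alpha.
    by apply: eq_bigr => j _; rewrite powR_nat.
  have eN : (n - m - 1 = n - 1 - m)%N by clear -n m; lia.
  have eP : powR p ((n - m - 1)%:R * (alpha / r)) = powR p (alpha / r) ^+ (n - 1 - m).
    by rewrite powR_nat // eN.
  rewrite eS eP.
  have hl : l ^+ m = l ^+ (m - 1) * l.
    by rewrite -exprSr; congr (_ ^+ _); clear -f1; lia.
  have hlm : 0 <= l ^+ (m - 1) by apply: exprn_ge0.
  move: HA HB hl hlm.
  move: (\sum_(2 <= i < m.+1) l ^+ (i - 2) * powR (t2 i) alpha) => S1.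
  move: (\sum_(m.+1 <= j < n) powR p (alpha / r) ^+ (j - m.+1) * powR (t2 j) alpha) => S2.
  move: (powR p (alpha / r)) => P.
  move: (powR (t2 n) alpha) (powR (tT m) alpha) (powR (tT 1%N) alpha) => Y X Z.
  move: (l ^+ m) (l ^+ (m - 1)) => lm lm1.
  clearbody l; clear -l0.
  move=> HA HB -> hlm.
  apply: le_trans HA; rewrite -addrA lerD2l.
  have := ler_wpM2l hlm HB; rewrite mulrDr !mulrA //.
- move=> n3 Hi.
  have f1 : (1 <= n - 1)%N by clear -n3; lia.
  have := hA (n - 1)%N f1 (leqnn _) Hi.
  have e1 : (n - 1).+1 = n by clear -n1; lia.
  have e2 : (n - 1 - 1 = n - 2)%N by clear; lia.
  by rewrite last e1 e2.
- move=> n3 Hj.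
  have f1 : (1 + (n - 2) <= n - 1)%N by clear -n3; lia.
  have f4 : forall j, (1 < j)%N -> (j <= 1 + (n - 2))%N -> (j <= n - 1)%N.
    by clear -n3; move=> j; lia.
  have := hB 1%N (n - 2)%N (leqnn _) f1 (fun j h1 h2 => Hj j h1 (f4 j h1 h2)).
  have e0 : (1 + (n - 2) = n - 1)%N by clear -n3; lia.
  have e1 : (n - 1).+1 = n by clear -n1; lia.
  rewrite e0 last e1.
  have eS : \sum_(2 <= j < n) powR p ((j - 2)%:R * (alpha / r)) * powR (t2 j) alpha
    = \sum_(2 <= j < n) powR p (alpha / r) ^+ (j - 2) * powR (t2 j) alpha.
    by apply: eq_bigr => j _; rewrite powR_nat.
  have eP : powR p ((n - 2)%:R * (alpha / r)) = powR p (alpha / r) ^+ (n - 2).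
    by rewrite powR_nat.
  by rewrite eS eP.
Qed.
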